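(* Let $\phi\ge 0$, $\sigma>0$ with $\sigma\neq 1$, $\rho>0$, $m>0$ be constants with $\rho+m(\sigma-1)(\phi+1)>0$. Let $c(t)>0$, $s(t)>0$, $p(t)$, $t\ge 0$, satisfy $$p=c^{-\sigma}s^{\phi(1-\sigma)},\qquad \dot s=ms-c,\qquad \dot p=\Big(\rho-m-\phi\frac{c}{s}\Big)p ,$$ with $c(0)=c_0$, $s(0)=s_0$, together with the transversality condition $\lim_{t\to\infty}e^{-\rho t}p(t)s(t)=0$. Then necessarily $$\frac{c_0}{s_0}\,\sigma(\phi+1)=\rho+m(\sigma-1)(\phi+1),$$ and $$s(t)=s_0e^{\frac{m(\phi+1)-\rho}{\sigma(\phi+1)}t},\quad c(t)=c_0e^{\frac{m(\phi+1)-\rho}{\sigma(\phi+1)}t},\quad p(t)=c_0^{-\sigma}s_0^{\phi(1-\sigma)}e^{(\rho-m-\phi\frac{c_0}{s_0})t}.$$ In particular $s$ and $c$ grow at the common constant rate $\frac{m(\phi+1)-\rho}{\sigma(\phi+1)}$ and $p$ at the constant rate $\rho-m-\phi\frac{c_0}{s_0}$.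
   Context: This system is the set of first-order optimality conditions for the optimal growth problem with environmental asset: maximize $\int_0^\infty \frac{(cs^\phi)^{1-\sigma}}{1-\sigma}e^{-\rho t}dt$ subject to $\dot s=ms-c$, with $p$ the costate variable. *)

(* Defs.v *)
From Stdlib Require Import Reals Lra.
Open Scope R_scope.

Definition lim_at_infty (f : R -> R) (l : R) : Prop :=
  forall eps : R, eps > 0 -> exists T : R, forall t : R, t >= T -> Rabs (f t - l) < eps.

Definition right_continuous_at (f : R -> R) (x0 : R) : Prop :=
  forall eps : R, eps > 0 -> exists delta : R, delta > 0 /\
    forall t : R, x0 <= t < x0 + delta -> Rabs (f t - f x0) < eps.

(* Main.v *)
Require Import Defs.
From Stdlib Require Import Reals Lra.
Open Scope R_scope.
From Stdlib Require Import Reals.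

Definition RC (f : R -> R) := right_continuous_at f 0.

Lemma rc_lim f : RC f <-> limit1_in f (fun t => 0 <= t) (f 0) 0.
Proof.
  unfold RC, right_continuous_at, limit1_in, limit_in; simpl; unfold R_dist.
  split; intros H eps Heps; destruct (H eps Heps) as [d [Hd H']]; exists d; split; auto.
  - intros x [Hx1 Hx2]. apply H'. split_Rabs; lra.
  - intros x Hx. apply H'. split; [lra|]. split_Rabs; lra.
Qed.

Lemma rc_mult f g : RC f -> RC g -> RC (fun t => f t * g t).
Proof. intros Hf Hg; apply rc_lim; apply rc_lim in Hf; apply rc_lim in Hg.
  apply limit_mul; auto. Qed.

Lemma rc_plus f g : RC f -> RC g -> RC (fun t => f t + g t).
Proof. intros Hf Hg; apply rc_lim; apply rc_lim in Hf; apply rc_lim in Hg.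
  apply limit_plus; auto. Qed.

Lemma rc_const a : RC (fun _ => a).
Proof. intros eps He; exists 1; split; [lra|]; intros; rewrite Rminus_diag, Rabs_R0; lra. Qed.

Lemma rc_id : RC (fun t => t).
Proof. intros eps He; exists eps; split; [lra|]; intros; rewrite Rminus_0_r, Rabs_right; lra. Qed.

Lemma rc_comp f g : RC f -> continuity_pt g (f 0) -> RC (fun t => g (f t)).
Proof.
  intros Hf Hg eps He.
  unfold continuity_pt, continue_in, limit1_in, limit_in in Hg; simpl in Hg; unfold R_dist in Hg.
  destruct (Hg eps He) as [a [Ha H']].
  destruct (Hf a Ha) as [d [Hd H'']].
  exists d; split; auto. intros t Ht.
  destruct (Req_dec (f t) (f 0)) as [E|E].
  - rewrite E, Rminus_diag, Rabs_R0; lra.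
  - apply H'. split. split; [exact I| auto]. apply H''; auto.
Qed.

Lemma rc_ext f g : (forall t, 0 <= t -> f t = g t) -> RC f -> RC g.
Proof. intros E Hf eps He; destruct (Hf eps He) as [d [Hd H]]; exists d; split; auto.
  intros t Ht. rewrite <- !E by lra. auto. Qed.

Lemma rc_eq f g : RC f -> RC g -> (forall t, 0 < t -> f t = g t) -> f 0 = g 0.
Proof.
  intros Hf Hg E. destruct (Req_dec (f 0) (g 0)) as [|N]; auto.
  set (eps := Rabs (f 0 - g 0) / 2).
  assert (He : eps > 0) by (unfold eps; assert (Rabs (f 0 - g 0) > 0) by (apply Rabs_pos_lt; lra); lra).
  destruct (Hf eps He) as [d1 [Hd1 H1]]. destruct (Hg eps He) as [d2 [Hd2 H2]].
  set (t := Rmin d1 d2 / 2).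
  assert (0 < t) by (unfold t; unfold Rmin; destruct Rle_dec; lra).
  assert (t < d1) by (unfold t; generalize (Rmin_l d1 d2); lra).
  assert (t < d2) by (unfold t; generalize (Rmin_r d1 d2); lra).
  specialize (H1 t ltac:(lra)). specialize (H2 t ltac:(lra)). rewrite E in H1 by lra.
  unfold eps in *. revert H1 H2. split_Rabs; lra.
Qed.

Lemma const_pos f : (forall t, 0 < t -> derivable_pt_lim f t 0) ->
  forall t, 0 < t -> f t = f 1.
Proof.
  intros D t Ht.
  destruct (Rtotal_order t 1) as [L|[L|L]].
  - destruct (MVT_cor2 f (fun _ => 0) t 1 L) as [c [Hc _]].
    intros c Hc; apply D; lra. lra.
  - subst; auto.
  - destruct (MVT_cor2 f (fun _ => 0) 1 t L) as [c [Hc _]].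
    intros c Hc; apply D; lra. lra.
Qed.

Lemma const_rc f : RC f -> (forall t, 0 < t -> derivable_pt_lim f t 0) ->
  forall t, 0 <= t -> f t = f 0.
Proof.
  intros Hf D.
  assert (E : f 0 = f 1).
  { apply (rc_eq f (fun _ => f 1)); auto. apply rc_const. apply const_pos; auto. }
  intros t Ht. destruct (Req_dec t 0). subst; auto. rewrite E. apply const_pos; auto; lra.
Qed.

Lemma d_ln f t d : 0 < f t -> derivable_pt_lim f t d ->
  derivable_pt_lim (fun u => ln (f u)) t (d / f t).
Proof. intros P D. replace (d / f t) with (/ f t * d) by (field; lra).
  apply (derivable_pt_lim_comp f ln). auto. apply derivable_pt_lim_ln; auto. Qed.

Lemma d_exp f t d : derivable_pt_lim f t d ->
  derivable_pt_lim (fun u => exp (f u)) t (exp (f t) * d).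
Proof. intros D. apply (derivable_pt_lim_comp f exp). auto. apply derivable_pt_lim_exp. Qed.

Lemma d_lin a t : derivable_pt_lim (fun u => a * u) t a.
Proof. pose proof (derivable_pt_lim_scal id a t 1 (derivable_pt_lim_id t)) as H. rewrite Rmult_1_r in H. exact H. Qed.

Lemma cont_ln y : 0 < y -> continuity_pt ln y.
Proof. intros. apply derivable_continuous_pt. exists (/y). apply derivable_pt_lim_ln; auto. Qed.

Lemma d_plus f g t a b : derivable_pt_lim f t a -> derivable_pt_lim g t b ->
  derivable_pt_lim (fun u => f u + g u) t (a + b).
Proof. intros. exact (derivable_pt_lim_plus f g t a b H H0). Qed.
Lemma d_minus f g t a b : derivable_pt_lim f t a -> derivable_pt_lim g t b ->
  derivable_pt_lim (fun u => f u - g u) t (a - b).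
Proof. intros. exact (derivable_pt_lim_minus f g t a b H H0). Qed.
Lemma d_mult f g t a b : derivable_pt_lim f t a -> derivable_pt_lim g t b ->
  derivable_pt_lim (fun u => f u * g u) t (a * g t + f t * b).
Proof. intros. exact (derivable_pt_lim_mult f g t a b H H0). Qed.
Lemma d_const c t : derivable_pt_lim (fun _ => c) t 0.
Proof. exact (derivable_pt_lim_const c t). Qed.
Lemma d_scal c f t a : derivable_pt_lim f t a -> derivable_pt_lim (fun u => c * f u) t (c * a).
Proof. intros. exact (derivable_pt_lim_scal f c t a H). Qed.
Lemma d_eq f t a b : derivable_pt_lim f t a -> a = b -> derivable_pt_lim f t b.
Proof. intros; subst; auto. Qed.

Theorem mainTheorem3 (phi sigma rho m c0 s0 : R) (c s p : R -> R)
  (hphi : 0 <= phi) (hsigma : 0 < sigma) (hsigma1 : sigma <> 1)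
  (hrho : 0 < rho) (hm : 0 < m)
  (hcond : rho + m * (sigma - 1) * (phi + 1) > 0)
  (hc_pos : forall t, 0 <= t -> 0 < c t)
  (hs_pos : forall t, 0 <= t -> 0 < s t)
  (hp : forall t, 0 <= t ->
     p t = Rpower (c t) (- sigma) * Rpower (s t) (phi * (1 - sigma)))
  (hs_cont0 : right_continuous_at s 0)
  (hp_cont0 : right_continuous_at p 0)
  (hs_dot : forall t, 0 < t -> derivable_pt_lim s t (m * s t - c t))
  (hp_dot : forall t, 0 < t ->
     derivable_pt_lim p t ((rho - m - phi * (c t / s t)) * p t))
  (hc0 : c 0 = c0) (hs0 : s 0 = s0)
  (htrans : lim_at_infty (fun t => exp (- rho * t) * p t * s t) 0) :
  c0 / s0 * sigma * (phi + 1) = rho + m * (sigma - 1) * (phi + 1) /\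
  (forall t, 0 <= t ->
     s t = s0 * exp ((m * (phi + 1) - rho) / (sigma * (phi + 1)) * t) /\
     c t = c0 * exp ((m * (phi + 1) - rho) / (sigma * (phi + 1)) * t) /\
     p t = Rpower c0 (- sigma) * Rpower s0 (phi * (1 - sigma))
           * exp ((rho - m - phi * (c0 / s0)) * t)).
Proof.
  set (a := phi * (1 - sigma)).
  set (B := rho + m * (sigma - 1) * (phi + 1)).
  assert (Pp : forall t, 0 <= t -> 0 < p t).
  { intros t Ht; rewrite hp by auto; unfold Rpower; apply Rmult_lt_0_compat; apply exp_pos. }
  assert (Hlnp : forall t, 0 <= t -> ln (p t) = - sigma * ln (c t) + a * ln (s t)).
  { intros t Ht; rewrite hp by auto; unfold Rpower. rewrite ln_mult by apply exp_pos.
    rewrite !ln_exp; reflexivity. }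
  set (lc := fun t => (a * ln (s t) - ln (p t)) * / sigma).
  assert (Hc : forall t, 0 <= t -> c t = exp (lc t)).
  { intros t Ht. rewrite <- (exp_ln (c t)) by auto. f_equal. unfold lc. rewrite Hlnp by auto. field. lra. }
  assert (Dlc : forall t, 0 < t -> derivable_pt_lim lc t
     ((a * ((m * s t - c t) / s t) - ((rho - m - phi * (c t / s t)) * p t) / p t) * / sigma)).
  { intros t Ht. unfold lc.
    pose proof (d_mult _ _ t _ _
      (d_minus _ _ t _ _ (d_scal a _ t _ (d_ln s t _ (hs_pos t ltac:(lra)) (hs_dot t Ht)))
                         (d_ln p t _ (Pp t ltac:(lra)) (hp_dot t Ht)))
      (d_const (/ sigma) t)) as D.
    eapply d_eq; [exact D|]. simpl. ring. }
  set (k := B / sigma). set (A := (phi + 1) / k).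
  assert (Hk : 0 < k) by (unfold k, B; apply Rdiv_lt_0_compat; lra).
  set (Q := fun t => (k - rho) * t + ln (p t) + lc t).
  assert (DQ : forall t, 0 < t -> derivable_pt_lim Q t 0).
  { intros t Ht. unfold Q.
    pose proof (d_plus _ _ t _ _ (d_plus _ _ t _ _ (d_lin (k - rho) t)
       (d_ln p t _ (Pp t ltac:(lra)) (hp_dot t Ht))) (Dlc t Ht)) as D.
    eapply d_eq; [exact D|]. simpl.
    assert (0 < s t) by (apply hs_pos; lra). assert (0 < p t) by (apply Pp; lra).
    unfold k, B, a. field. lra. }
  set (G := fun t => (s t * exp (-1 * lc t) - A) * exp (- k * t)).
  assert (DG : forall t, 0 < t -> derivable_pt_lim G t 0).
  { intros t Ht. unfold G.
    pose proof (d_mult _ _ t _ _ (d_minus _ _ t _ _ (d_mult _ _ t _ _ (hs_dot t Ht)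
       (d_exp _ t _ (d_scal (-1) lc t _ (Dlc t Ht)))) (d_const A t))
       (d_exp _ t _ (d_lin (- k) t))) as D.
    eapply d_eq; [exact D|]. simpl.
    replace (exp (-1 * lc t)) with (/ c t) by (rewrite Hc by lra; rewrite <- exp_Ropp; f_equal; ring).
    assert (0 < s t) by (apply hs_pos; lra). assert (0 < p t) by (apply Pp; lra).
    assert (0 < c t) by (apply hc_pos; lra).
    unfold A, k, B, a. field. repeat split; lra. }
  pose proof (const_pos Q DQ) as HQ. pose proof (const_pos G DG) as HG.
  set (q := Q 1) in *. set (g := G 1) in *.
  assert (HPC : forall t, 0 < t -> p t * c t = exp (q - (k - rho) * t)).
  { intros t Ht. assert (0 < p t) by (apply Pp; lra). assert (0 < c t) by (apply hc_pos; lra).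
    rewrite <- (exp_ln (p t * c t)) by (apply Rmult_lt_0_compat; auto).
    f_equal. rewrite ln_mult by auto. rewrite (Hc t) by lra. rewrite ln_exp.
    specialize (HQ t Ht). unfold Q in HQ. lra. }
  assert (HSC : forall t, 0 < t -> s t / c t = A + g * exp (k * t)).
  { intros t Ht. assert (0 < c t) by (apply hc_pos; lra).
    specialize (HG t Ht). unfold G in HG.
    replace (exp (-1 * lc t)) with (/ c t) in HG by (rewrite Hc by lra; rewrite <- exp_Ropp; f_equal; ring).
    replace (- k * t) with (- (k * t)) in HG by ring. rewrite exp_Ropp in HG.
    assert (0 < exp (k * t)) by apply exp_pos.
    rewrite <- HG. field. lra. }
  assert (Hg : g = 0).
  { destruct (Rtotal_order g 0) as [L|[L|L]]; auto; exfalso.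
    - set (t := (1 - A / g) / k).
      assert (Ht : 0 < t).
      { unfold t. apply Rdiv_lt_0_compat; auto. assert (0 < A) by (unfold A; apply Rdiv_lt_0_compat; lra).
        assert (A / g < 0) by (apply Rdiv_pos_neg; lra). lra. }
      assert (Hkt : k * t = 1 - A / g) by (unfold t; field; lra).
      assert (HE : 1 + k * t < exp (k * t)) by (apply exp_ineq1; nra).
      assert (g * exp (k * t) < g * (2 - A / g)) by (apply Rmult_lt_gt_compat_neg_l; lra).
      replace (g * (2 - A / g)) with (2 * g - A) in H by (field; lra).
      pose proof (HSC t Ht).
      assert (0 < s t / c t) by (apply Rdiv_lt_0_compat; [apply hs_pos|apply hc_pos]; lra).
      lra.
    - assert (He : exp q * g > 0) by (apply Rmult_lt_0_compat; [apply exp_pos|lra]).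
      destruct (htrans _ He) as [T HT].
      set (t := Rmax T 1).
      assert (Ht1 : 1 <= t) by apply Rmax_r. assert (HtT : t >= T) by (apply Rle_ge, Rmax_l).
      specialize (HT t HtT). simpl in HT.
      assert (0 < c t) by (apply hc_pos; lra).
      assert (EW : exp (- rho * t) * p t * s t = exp q * (A * / exp (k * t) + g)).
      { replace (exp (- rho * t) * p t * s t) with (exp (- rho * t) * (p t * c t) * (s t / c t)) by (field; lra).
        rewrite HPC, HSC by lra. rewrite <- exp_plus.
        replace (- rho * t + (q - (k - rho) * t)) with (q + - (k * t)) by ring.
        rewrite exp_plus, exp_Ropp. assert (0 < exp (k * t)) by apply exp_pos. field. lra. }
      rewrite EW, Rminus_0_r in HT.
      assert (0 < A) by (unfold A; apply Rdiv_lt_0_compat; lra).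
      assert (0 < A * / exp (k * t)) by (apply Rmult_lt_0_compat; [lra | apply Rinv_0_lt_compat, exp_pos]).
      assert (0 < exp q) by apply exp_pos.
      assert (exp q * (A * / exp (k * t) + g) > exp q * g) by nra.
      rewrite Rabs_right in HT by nra. lra. }
  rewrite Hg in HSC.
  assert (HA : 0 < A) by (unfold A; apply Rdiv_lt_0_compat; lra).
  assert (Hcs : forall t, 0 < t -> c t = s t / A).
  { intros t Ht. specialize (HSC t Ht). assert (0 < c t) by (apply hc_pos; lra).
    rewrite Rmult_0_l, Rplus_0_r in HSC. rewrite <- HSC. assert (0 < s t) by (apply hs_pos; lra). field. split; lra. }
  assert (Hexp : forall x, continuity_pt exp x) by (intro; apply derivable_continuous_pt, derivable_pt_exp).
  assert (Hs0 : 0 < s0) by (rewrite <- hs0; apply hs_pos; lra).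
  assert (Hc0p : 0 < c0) by (rewrite <- hc0; apply hc_pos; lra).
  set (r := m - 1 / A).
  assert (Hr : r = (m * (phi + 1) - rho) / (sigma * (phi + 1))).
  { unfold r, A, k, B. field. repeat split; lra. }
  assert (Hsol : forall t, 0 <= t -> s t = s0 * exp (r * t)).
  { set (Fs := fun t => s t * exp (- r * t)).
    assert (RFs : RC Fs).
    { apply rc_mult. exact hs_cont0. apply (rc_comp (fun t => - r * t) exp).
      apply rc_mult. apply rc_const. apply rc_id. apply Hexp. }
    assert (DFs : forall t, 0 < t -> derivable_pt_lim Fs t 0).
    { intros t Ht. unfold Fs.
      pose proof (d_mult _ _ t _ _ (hs_dot t Ht) (d_exp _ t _ (d_lin (- r) t))) as D.
      eapply d_eq; [exact D|]. rewrite Hcs by auto. unfold r. field. lra. }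
    intros t Ht. pose proof (const_rc Fs RFs DFs t Ht) as E. unfold Fs in E.
    rewrite Rmult_0_r, exp_0, Rmult_1_r, hs0 in E.
    rewrite <- E. rewrite Rmult_assoc, <- exp_plus. replace (- r * t + r * t) with 0 by ring.
    rewrite exp_0; ring. }
  assert (RClc : RC lc).
  { apply (rc_ext (fun t => (a * ln (s t) + -1 * ln (p t)) * / sigma)).
    intros; unfold lc; ring.
    apply rc_mult; [|apply rc_const]. apply rc_plus; apply rc_mult; try apply rc_const.
    apply (rc_comp s ln). exact hs_cont0. apply cont_ln; rewrite hs0; auto.
    apply (rc_comp p ln). exact hp_cont0. apply cont_ln; apply Pp; lra. }
  assert (RCc : RC c).
  { apply (rc_ext (fun t => exp (lc t))). intros; symmetry; auto.
    apply (rc_comp lc exp); auto. }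
  assert (Hc0A : c0 = s0 / A).
  { rewrite <- hc0, <- hs0. apply (rc_eq c (fun t => s t / A)); auto.
    apply (rc_ext (fun t => s t * / A)). intros; reflexivity. apply rc_mult; [exact hs_cont0|apply rc_const]. }
  assert (Hcsol : forall t, 0 <= t -> c t = c0 * exp (r * t)).
  { intros t Ht. destruct (Req_dec t 0) as [->|Hn].
    - rewrite Rmult_0_r, exp_0, Rmult_1_r; auto.
    - rewrite Hcs, Hsol, Hc0A by lra. field. lra. }
  set (lam := rho - m - phi * (c0 / s0)).
  assert (Hpsol : forall t, 0 <= t -> p t = p 0 * exp (lam * t)).
  { set (Fp := fun t => p t * exp (- lam * t)).
    assert (RFp : RC Fp).
    { apply rc_mult. exact hp_cont0. apply (rc_comp (fun t => - lam * t) exp).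
      apply rc_mult. apply rc_const. apply rc_id. apply Hexp. }
    assert (DFp : forall t, 0 < t -> derivable_pt_lim Fp t 0).
    { intros t Ht. unfold Fp.
      pose proof (d_mult _ _ t _ _ (hp_dot t Ht) (d_exp _ t _ (d_lin (- lam) t))) as D.
      eapply d_eq; [exact D|]. assert (0 < s t) by (apply hs_pos; lra).
      rewrite Hcs by auto. unfold lam. rewrite Hc0A. field. repeat split; lra. }
    intros t Ht. pose proof (const_rc Fp RFp DFp t Ht) as E. unfold Fp in E.
    rewrite Rmult_0_r, exp_0, Rmult_1_r in E.
    rewrite <- E. rewrite Rmult_assoc, <- exp_plus. replace (- lam * t + lam * t) with 0 by ring.
    rewrite exp_0; ring. }
  split.
  - rewrite Hc0A. unfold A, k, B. field. repeat split; lra.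
  - intros t Ht. rewrite <- Hr. repeat split; auto.
    rewrite Hpsol by auto. rewrite hp, hc0, hs0 by lra. reflexivity.
Qed.
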